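(* For all $n\ge0$, $$F_n(x,y,q)F_{n+1}(x,y,q)=\sum_{j=0}^nxy^jq^{\lfloor j^2/2\rfloor}F_{n-j}(xq^j,yq^j,q)F_{n-j}(xq^{j+1},yq^{j+1},q).$$
   Context: $\Pi_n(13/2,123)$ is the set of layered matchings of $[n]$: set partitions whose blocks are consecutive intervals $[1,i_1]/\dots/[i_{k-1}+1,n]$, each of size $1$ or $2$. $\Pi_0(13/2,123)$ consists of the empty partition. For $\pi=B_1/\dots/B_k$ with $\min B_1<\dots<\min B_k$, $rb(\pi)$ is the number of pairs $(b,B_j)$ with $b\in B_i$, $j>i$, $\max B_j>b$. Let $s(\pi)$ and $d(\pi)$ be the numbers of blocks of size $1$ and $2$. Define $F_n(x,y,q)=\sum_{\pi\in\Pi_n(13/2,123)}x^{s(\pi)}y^{d(\pi)}q^{rb(\pi)}$, so $F_0=1$ and $F_1=x$. $F_n(xq^a,yq^a,q)$ denotes the substitution $x\mapsto xq^a$, $y\mapsto yq^a$. *)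

(* Defs.v *)
From HB Require Import structures.
From mathcomp Require Import all_boot all_order all_algebra.
Set Implicit Arguments. Unset Strict Implicit. Unset Printing Implicit Defensive.
Import GRing.Theory.

(* A set partition of [n] is represented as the list of its blocks
   B_1, ..., B_k, ordered by increasing minima; each block is a list of
   its elements in increasing order. *)

(* Compositions of n with parts in {1,2} (the sizes of the consecutive
   interval blocks of a layered matching, read from left to right). *)
Fixpoint comps12 (n : nat) : seq (seq nat) :=
  match n with
  | 0 => [:: [::]]
  | 1 => [:: [:: 1]]
  | (m.+1 as m1).+1 => [seq 1 :: c | c <- comps12 m1] ++ [seq 2 :: c | c <- comps12 m]
  end.

Fixpoint blocks_of (a : nat) (c : seq nat) : seq (seq nat) :=
  match c with
  | [::] => [::]
  | p :: c' => iota a p :: blocks_of (a + p) c'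
  end.

Definition layered (n : nat) : seq (seq (seq nat)) :=
  [seq blocks_of 1 c | c <- comps12 n].

Definition maxB (B : seq nat) : nat := foldr maxn 0 B.

Definition rb (P : seq (seq nat)) : nat :=
  sumn [seq count (fun Bj => b < maxB Bj) (drop i.+1 P)
       | i <- iota 0 (size P), b <- nth [::] P i].

Definition sblocks (P : seq (seq nat)) : nat := count (fun B => size B == 1) P.
Definition dblocks (P : seq (seq nat)) : nat := count (fun B => size B == 2) P.

Definition F (R : comRingType) (n : nat) (x y q : R) : R :=
  (\sum_(P <- layered n) x ^+ sblocks P * y ^+ dblocks P * q ^+ rb P)%R.

(* Main.v *)
Require Import Defs.
From HB Require Import structures.
From Stdlib Require Import Lia.
From mathcomp Require Import all_boot all_order all_algebra.
Import GRing.Theory.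
Local Open Scope ring_scope.
Set Implicit Arguments. Unset Strict Implicit.

Fixpoint rbc (c : seq nat) : nat :=
  match c with [::] => 0%N | p :: c' => (p * size c' + rbc c')%N end.

Definition ok12 (c : seq nat) := all (fun p => (p == 1%N) || (p == 2%N)) c.

Lemma comps_ok n : (forall c, c \in comps12 n -> ok12 c) /\
                   (forall c, c \in comps12 n.+1 -> ok12 c).
Proof.
elim: n => [|n [IH1 IH2]].
  by split=> c; rewrite inE => /eqP ->.
split=> // c; rewrite [comps12 _]/= mem_cat => /orP[] /mapP[c' Hc' ->] /=.
  by rewrite IH2.
by rewrite IH1.
Qed.

Lemma rb_cons B P : rb (B :: P) =
  (sumn [seq count (fun Bj => b < maxB Bj) P | b <- B] + rb P)%N.
Proof.
rewrite /rb /= drop0 sumn_cat; congr (_ + _)%N.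
have -> : iota 1 (size P) = map S (iota 0 (size P)) by rewrite -(iotaDl 1).
by rewrite -map_comp.
Qed.

Lemma maxB_ge b B : b \in B -> (b <= maxB B)%N.
Proof.
elim: B => //= a B IH; rewrite inE => /orP[/eqP->|/IH H].
  by rewrite leq_maxl.
by rewrite (leq_trans H) // leq_maxr.
Qed.

Lemma blocks_ge a c Bj : all (fun p => 0 < p)%N c -> Bj \in blocks_of a c ->
  (a <= maxB Bj)%N.
Proof.
elim: c a => //= p c IH a /andP[p0 Hc]; rewrite inE => /orP[/eqP->|H].
  by apply: maxB_ge; rewrite mem_iota leqnn /= -addn1 leq_add2l.
by apply: leq_trans (IH _ Hc H); rewrite leq_addr.
Qed.

Lemma sumn_const (s : seq nat) k : sumn [seq k | _ <- s] = (size s * k)%N.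
Proof. by elim: s => //= a s ->; rewrite mulSn. Qed.

Lemma size_blocks a c : size (blocks_of a c) = size c.
Proof. by elim: c a => //= p c IH a; rewrite IH. Qed.

Lemma rb_blocks a c : all (fun p => 0 < p)%N c -> rb (blocks_of a c) = rbc c.
Proof.
elim: c a => //= p c IH a /andP[p0 Hc]; rewrite rb_cons IH //.
congr (_ + _)%N.
have E : forall b, b \in iota a p ->
   count (fun Bj => b < maxB Bj)%N (blocks_of (a + p) c) = size c.
  move=> b; rewrite mem_iota => /andP[_ hb].
  rewrite (eq_in_count (a2 := predT)) ?count_predT.
    by rewrite size_blocks.
  by move=> Bj /(@blocks_ge _ _ _ Hc) H; exact: leq_trans hb H.
by rewrite (proj1 (eq_in_map _ (fun _ => size c) _) E) sumn_const size_iota.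
Qed.

Definition Fc (R : comRingType) n (x y q : R) : R :=
  \sum_(c <- comps12 n) x ^+ count (pred1 1%N) c * y ^+ count (pred1 2%N) c * q ^+ rbc c.

Arguments Fc {R}.

Lemma sb_blocks a c : sblocks (blocks_of a c) = count (pred1 1%N) c.
Proof. by elim: c a => //= p c IH a; rewrite IH size_iota. Qed.
Lemma db_blocks a c : dblocks (blocks_of a c) = count (pred1 2%N) c.
Proof. by elim: c a => //= p c IH a; rewrite IH size_iota. Qed.

Lemma ok12_pos c : ok12 c -> all (fun p => 0 < p)%N c.
Proof. by elim: c => //= p c IH /andP[/orP[]/eqP-> /IH ->]. Qed.

Lemma ok12_size c : ok12 c -> size c = (count (pred1 1%N) c + count (pred1 2%N) c)%N.
Proof.
elim: c => //= p c IH /andP[/orP[]/eqP-> /IH ->] /=; rewrite ?add0n ?addn0 //.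
by rewrite addnS.
Qed.

Lemma FFc (R : comRingType) n (x y q : R) : F n x y q = Fc n x y q.
Proof.
rewrite /F /Fc /layered big_map big_seq [RHS]big_seq; apply: eq_bigr => c Hc.
have [H1 _] := comps_ok n.
by rewrite sb_blocks db_blocks rb_blocks // ok12_pos // H1.
Qed.

Lemma F0 (R : comRingType) (x y q : R) : F 0 x y q = 1.
Proof. by rewrite FFc /Fc /= big_cons big_nil /= !expr0 !mulr1 addr0. Qed.
Lemma F1 (R : comRingType) (x y q : R) : F 1 x y q = x.
Proof. by rewrite FFc /Fc /= big_cons big_nil /= !expr0 expr1 !mulr1 addr0. Qed.

Lemma ac1 (R : comRingType) (a b c d e f : R) : a*b*c*(d*e*f) = a*((b*d)*(c*e)*f).
Proof. by rewrite -!mulrA; congr (_*_); rewrite !mulrA; congr (_*_); rewrite -!mulrA; congr (_*_); rewrite mulrCA. Qed.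
Lemma ac2 (R : comRingType) (a b c d e f : R) : a*(b*c)*(d*e*f) = b*((a*d)*(c*e)*f).
Proof. by rewrite (mulrCA a b c) -(mulrA b); congr (_*_); rewrite -!mulrA; congr (_*_); rewrite mulrCA. Qed.

Lemma Frec (R : comRingType) n (x y q : R) : F n.+2 x y q =
  x * F n.+1 (x * q) (y * q) q + y * F n (x * q ^+ 2) (y * q ^+ 2) q.
Proof.
rewrite !FFc /Fc.
have -> : comps12 n.+2 = [seq 1%N :: c | c <- comps12 n.+1] ++ [seq 2%N :: c | c <- comps12 n] by [].
rewrite big_cat !big_map !big_distrr.
have [H1 H2] := comps_ok n.
congr (_ + _); rewrite big_seq [RHS]big_seq; apply: eq_bigr => c Hc.
  rewrite /= (ok12_size (H2 _ Hc)) add0n mul1n !exprD expr1 !exprMn.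
  exact: ac1.
have E1 : count_mem 1%N (2%N :: c) = count_mem 1%N c by [].
have E2 : count_mem 2%N (2%N :: c) = (1 + count_mem 2%N c)%N by [].
have E3 : rbc (2%N :: c) = (2 * size c + rbc c)%N by [].
rewrite E1 E2 E3 (ok12_size (H1 _ Hc)) (exprD q) exprM !exprD expr1 !exprMn.
by rewrite ac2.
Qed.

Lemma ac3 (R : comRingType) (x a b c d e : R) :
  x*(a*b)*(c*(d*e)) = b*(x*e*(a*d)*c).
Proof.
rewrite -!mulrA (mulrCA x a) (mulrCA x b) (mulrCA a b); congr (_ * _).
rewrite (mulrCA a x); congr (_ * _).
rewrite (mulrC d e) (mulrCA c e) (mulrCA a e); congr (_ * _).
by rewrite (mulrC c d).
Qed.

Lemma nat_id i : (i.+2 * i.+2 = i * i + (2 * i + 2).*2)%N.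
Proof. rewrite -!muln2 -?plusE -?multE. lia. Qed.

Lemma term_eq (R : comRingType) (x y q : R) n (i : nat) :
  x * y ^+ i.+2 * q ^+ (i.+2 * i.+2)./2
     * F (n.+2 - i.+2) (x * q ^+ i.+2) (y * q ^+ i.+2) q
     * F (n.+2 - i.+2) (x * q ^+ i.+3) (y * q ^+ i.+3) q =
  y ^+ 2 * (x * q ^+ 2 * (y * q ^+ 2) ^+ i * q ^+ (i * i)./2
     * F (n - i) (x * q ^+ 2 * q ^+ i) (y * q ^+ 2 * q ^+ i) q
     * F (n - i) (x * q ^+ 2 * q ^+ i.+1) (y * q ^+ 2 * q ^+ i.+1) q).
Proof.
have e (a : R) k : a * q ^+ 2 * q ^+ k = a * q ^+ k.+2.
  by rewrite -mulrA -exprD addnC addn2.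
rewrite subSS subSS !e.
set A := F _ _ _ q; set B := F _ _ _ q.
rewrite (mulrA (y ^+ 2)) (mulrA (y ^+ 2)); congr (_ * _ * _).
rewrite nat_id halfD odd_double andbF add0n doubleK.
rewrite -[i.+2]addn2 (exprD y) (exprD q ((i * i)./2)) (exprD q (2 * i) 2).
rewrite exprMn -exprM.
exact: ac3.
Qed.

Unset Implicit Arguments.
Definition RHS {R : comRingType} (x y q : R) (n : nat) :=
  \sum_(j < n.+1)
     x * y ^+ j * q ^+ (j * j)./2
       * F (n - j) (x * q ^+ j) (y * q ^+ j) q
       * F (n - j) (x * q ^+ j.+1) (y * q ^+ j.+1) q.

Theorem theorem4p5 (R : comRingType) (x y q : R) (n : nat) :
  F n x y q * F n.+1 x y q =
  \sum_(j < n.+1)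
     x * y ^+ j * q ^+ (j * j)./2
       * F (n - j) (x * q ^+ j) (y * q ^+ j) q
       * F (n - j) (x * q ^+ j.+1) (y * q ^+ j.+1) q.
Proof.
suff H : forall n, (forall x y, F n x y q * F n.+1 x y q = RHS x y q n) /\
                   (forall x y, F n.+1 x y q * F n.+2 x y q = RHS x y q n.+1).
  exact: (proj1 (H n)).
clear n; elim=> [|n [IH1 IH2]].
  split=> x' y'.
    by rewrite /RHS big_ord1 /= subnn !F0 F1 !mulr1 mul1r.
  rewrite /RHS 2!big_ord_recl big_ord0 /= Frec F0 F1 F1 F1 F0 /=.
  by rewrite /bump /= !expr0 expr1 !mulr1 addr0 mulrDr !mulrA.
split=> // x' y'.
rewrite (Frec n.+1) mulrDr /RHS 2!big_ord_recl.
set S := (\sum_(i < n.+1) _).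
have -> : S = y' ^+ 2 * RHS (x' * q ^+ 2) (y' * q ^+ 2) q n.
  rewrite /S /RHS big_distrr; apply: eq_bigr => i _; rewrite !lift0; exact: term_eq.
rewrite -IH1 !lift0 /= subn0 subn1 /=.
rewrite !expr0 !expr1 !mulr1 (Frec n x' y').
set F1 := F n.+1 (x' * q) _ q; set E := F n _ _ q; set B := F n.+2 _ _ q.
set C := F n.+1 (x' * q ^+ 2) _ q.
rewrite (mulrDl _ _ (y' * C)); congr (_ + (_ + _)).
- by rewrite mulrCA mulrA.
- by rewrite -!mulrA (mulrCA F1 y').
- by rewrite expr2 -!mulrA (mulrCA E y' C).
Qed.
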